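(* Let $X$ be a metric space with an accumulation point, and let $\rho:\mathcal{F}\to[\Psi]^\omega$ be a partition regular function. Then: (i) $\rho$ is $P^+$ if and only if $\Lambda_x(\rho)=\Gamma_x(\rho)$ for every sequence $x\in X^\Psi$; (ii) $\rho$ is $P^{\,|}$ if and only if $\Lambda_x(\rho)$ is closed for every sequence $x\in X^\Psi$; (iii) if $X$ is moreover locally compact, then $\rho$ is $P^-$ if and only if, for every sequence $x\in X^\Psi$, each isolated point of $\Gamma_x(\rho)$ belongs to $\Lambda_x(\rho)$.
   Context: Let $\Omega,\Psi$ be countably infinite sets and $\mathcal{F}\subseteq[\Omega]^\omega$ a nonempty family of infinite subsets of $\Omega$ with $A\setminus K\in\mathcal{F}$ for all $A\in\mathcal{F}$ and finite $K\subseteq\Omega$. A function $\rho:\mathcal{F}\to[\Psi]^\omega$ is partition regular if: (M) $E\subseteq F$ in $\mathcal{F}$ implies $\rho(E)\subseteq\rho(F)$; (R) for every $F\in\mathcal{F}$ and $A,B\subseteq\Psi$ with $\rho(F)=A\cup B$ there is $E\in\mathcal{F}$ with $\rho(E)\subseteq A$ or $\rho(E)\subseteq B$; (S) for every $F\in\mathcal{F}$ there is $E\subseteq F$, $E\in\mathcal{F}$, such that for every $a\in\rho(E)$ there is a finite $K\subseteq\Omega$ with $a\notin\rho(E\setminus K)$. $\mathcal{I}_\rho=\{S\subseteq\Psi:\forall F\in\mathcal{F}\ \rho(F)\not\subseteq S\}$ and $\mathcal{I}_\rho^+=\mathcal{P}(\Psi)\setminus\mathcal{I}_\rho$. For $F\in\mathcal{F}$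 and $B\subseteq\Psi$ write $\rho(F)\subseteq^\rho B$ if there is a finite $K\subseteq\Omega$ with $\rho(F\setminus K)\subseteq B$. $\rho$ is $P^+$ if for every $\subseteq$-decreasing sequence $(A_n)_{n\in\omega}$ of sets in $\mathcal{I}_\rho^+$ there is $F\in\mathcal{F}$ with $\rho(F)\subseteq^\rho A_n$ for all $n$; $P^-$ if the same holds for every such sequence with additionally $A_n\setminus A_{n+1}\in\mathcal{I}_\rho$ for all $n$; $P^{\,|}$ if the same holds for every such sequence with additionally $A_n\setminus A_{n+1}\in\mathcal{I}_\rho^+$ for all $n$. For $x:\Psi\to X$: $\Gamma_x(\rho)$ is the set of $\eta\in X$ such that for every neighborhood $U$ of $\eta$ there is $F\in\mathcal{F}$ with $\rho(F)\subseteq\{s\in\Psi:x_s\in U\}$; $\Lambda_x(\rho)$ is the set of $\eta\in X$ for which there is $F\in\mathcal{F}$ such that for every neighborhood $U$ of $\eta$ there is a finite $K\subseteq\Omega$ with $x_s\in U$ for all $s\in\rho(F\setminus K)$. *)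

(* Defs.v *)
From HB Require Import structures.
From mathcomp Require Import all_boot all_order all_algebra.
From mathcomp Require Import all_classical all_reals topology.
Set Implicit Arguments. Unset Strict Implicit. Unset Printing Implicit Defensive.
Local Open Scope classical_set_scope.

Section PRF.
Context {Omega Psi : Type}.

Definition good_family (F : set (set Omega)) : Prop :=
  (exists A, F A) /\ (forall A, F A -> infinite_set A) /\
  (forall A K, F A -> finite_set K -> F (A `\` K)).

(* rho : F -> [Psi]^omega; only values on members of F matter *)
Definition partition_regular (F : set (set Omega)) (rho : set Omega -> set Psi) : Prop :=
  (forall E, F E -> infinite_set (rho E)) /\
  (forall E G, F E -> F G -> E `<=` G -> rho E `<=` rho G) /\
  (forall G (A B : set Psi), F G -> rho G = A `|` B ->
               exists E, F E /\ (rho E `<=` A \/ rho E `<=` B)) /\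
  (forall G, F G -> exists E, F E /\ E `<=` G /\
               forall a, rho E a -> exists K, finite_set K /\ ~ rho (E `\` K) a).

Definition I_rho (F : set (set Omega)) (rho : set Omega -> set Psi) : set (set Psi) :=
  [set S | forall E, F E -> ~ (rho E `<=` S)].

Definition I_rho_plus F rho : set (set Psi) := ~` I_rho F rho.

Definition sub_rho (rho : set Omega -> set Psi) (E : set Omega) (B : set Psi) : Prop :=
  exists K, finite_set K /\ rho (E `\` K) `<=` B.

Definition P_plus F rho : Prop :=
  forall A : nat -> set Psi, (forall n, A n.+1 `<=` A n) ->
    (forall n, I_rho_plus F rho (A n)) ->
    exists E, F E /\ forall n, sub_rho rho E (A n).

Definition P_minus F rho : Prop :=
  forall A : nat -> set Psi, (forall n, A n.+1 `<=` A n) ->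
    (forall n, I_rho_plus F rho (A n)) ->
    (forall n, I_rho F rho (A n `\` A n.+1)) ->
    exists E, F E /\ forall n, sub_rho rho E (A n).

Definition P_bar F rho : Prop :=
  forall A : nat -> set Psi, (forall n, A n.+1 `<=` A n) ->
    (forall n, I_rho_plus F rho (A n)) ->
    (forall n, I_rho_plus F rho (A n `\` A n.+1)) ->
    exists E, F E /\ forall n, sub_rho rho E (A n).

Context {X : topologicalType}.

Definition Gamma (F : set (set Omega)) (rho : set Omega -> set Psi) (x : Psi -> X) : set X :=
  [set eta | forall U, nbhs eta U -> exists E, F E /\ rho E `<=` [set s | U (x s)]].

Definition Lambda (F : set (set Omega)) (rho : set Omega -> set Psi) (x : Psi -> X) : set X :=
  [set eta | exists E, F E /\ forall U, nbhs eta U ->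
     exists K, finite_set K /\ forall s, rho (E `\` K) s -> U (x s)].

End PRF.

Definition isolated_point {X : topologicalType} (A : set X) (eta : X) : Prop :=
  A eta /\ exists U, nbhs eta U /\ U `&` A = [set eta].

(* Main.v *)
Require Import Defs.
From HB Require Import structures.
From mathcomp Require Import all_boot all_order all_algebra.
From mathcomp Require Import all_classical all_reals topology.
From mathcomp Require Import lra finmap normedtype.
Local Open Scope classical_set_scope.
Import Order.TTheory GRing.Theory Num.Theory.
Set Implicit Arguments. Unset Strict Implicit.

Section Aux.
Local Open Scope ring_scope.
Context (Omega Psi : Type) (F : set (set Omega)) (rho : set Omega -> set Psi)
  (hF : good_family F) (hrho : partition_regular F rho).

Lemma rho_ne E : F E -> exists s, rho E s.
Proof.
move=> FE; case: hrho => [inf _]; have := inf E FE.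
apply: contra_notP => /forallNP h.
suff -> : rho E = set0 by exact: finite_set0.
by apply/seteqP; split=> s // /h.
Qed.

Lemma IplusP A : I_rho_plus F rho A <-> exists E, F E /\ rho E `<=` A.
Proof.
split.
  move=> h; apply: contrapT => hn; apply: h => E FE sub; apply: hn; by exists E.
by move=> [E [FE sub]] h; exact: (h E FE sub).
Qed.

Lemma Iplus_up A B : I_rho_plus F rho A -> A `<=` B -> I_rho_plus F rho B.
Proof.
move=> /IplusP [E [FE sub]] AB; apply/IplusP; exists E; split => //.
by move=> s /sub /AB.
Qed.

Lemma cover_list (T : eqType) (s : seq T) (P : T -> set Psi) G : F G ->
  rho G `<=` [set a | exists2 z, z \in s & P z a] ->
  exists E z, [/\ F E, z \in s & rho E `<=` P z].
Proof.
elim: s G => [|z s IH] G FG sub.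
  have [a ra] := rho_ne FG; have [z] := sub a ra; by rewrite in_nil.
case: hrho => [_ [_ [hR _]]].
have [E [FE [h|h]]] := hR G (rho G `&` P z) (rho G `\` P z) FG (esym (setUIDK _ _)).
  exists E, z; split => //; first by rewrite mem_head.
  by move=> a /h [].
have [E' [z' [FE' z's sub']]] : exists E z, [/\ F E, z \in s & rho E `<=` P z].
  apply: (IH E FE) => a /h [/sub [w]]; rewrite in_cons => /orP [/eqP -> //|ws Pw] _.
  by exists w.
by exists E', z'; split => //; rewrite in_cons z's orbT.
Qed.

Lemma Adec_le (A : nat -> set Psi) : (forall n, A n.+1 `<=` A n) ->
  forall n m, (n <= m)%N -> A m `<=` A n.
Proof.
move=> Ad n m; elim: m => [|m IH]; first by rewrite leqn0 => /eqP ->.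
rewrite leq_eqVlt => /orP [/eqP -> //|]; rewrite ltnS => /IH h s /Ad /h //.
Qed.

End Aux.

Section Top.
Local Open Scope ring_scope.
Context (R : realType) (X : pseudoMetricType R) (hX : hausdorff_space X).

Lemma hsep (x y : X) : x != y -> exists2 e : R, 0 < e & ~ ball x e y.
Proof.
move=> /eqP xy; apply: contrapT => hn; apply: xy; apply: hX.
move=> A B /nbhs_ballP [e1 e1p s1] /nbhs_ballP [e2 e2p s2].
exists y; split; last exact/s2/ballxx.
apply: s1; apply: contrapT => nb; apply: hn; by exists e1.
Qed.

Lemma nbhs_avoid (z : X) (y : nat -> X) N :
  nbhs z [set w | forall k, (k < N)%N -> y k != z -> w != y k].
Proof.
elim: N => [|N IH].
  by apply: (filterS (P:=setT)); [move=> w _ k | exact: filterT].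
have hN : nbhs z [set w | y N != z -> w != y N].
  have [->|yz] := eqVneq (y N) z.
    by apply: (filterS (P:=setT)); [move=> w _ /= | exact: filterT].
  have [e ep nb] := hsep yz.
  apply/nbhs_ballP; exists e => // w bw _; apply/eqP => wy.
  apply: nb; rewrite -wy; apply: ball_sym.
  by []. 
apply: (filterS _ (filterI IH hN)) => w [h1 h2] k; rewrite ltnS leq_eqVlt.
case/orP => [/eqP -> |]; [exact: h2 | exact: h1].
Qed.

Lemma small_inv (e : R) : 0 < e ->
  exists N : nat, forall m, (N <= m)%N -> (m.+1%:R)^-1 < e.
Proof.
move=> ep; exists (Num.Def.archi_bound (e^-1)) => m Nm.
have h1 : e^-1 < (Num.Def.archi_bound e^-1)%:R by apply: archi_boundP; rewrite invr_ge0 ltW.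
rewrite invf_plt ?posrE ?ltr0Sn //.
apply: (lt_le_trans h1); rewrite ler_nat; exact: leqW.
Qed.

Lemma seq_build (p : X) (S : set X) :
  (forall r : R, 0 < r -> exists y, [/\ S y, y != p & ball p r y]) ->
  exists (y : nat -> X) (r : nat -> R), forall m,
    [/\ 0 < r m, r m <= (m.+1%:R)^-1, r m.+1 <= r m & S (y m)] /\
    [/\ y m != p, ball p (r m) (y m) & ~ ball p (4 * r m.+1) (y m)].
Proof.
move=> hS.
have H' : forall r : R, exists y, 0 < r -> [/\ S y, y != p & ball p r y].
  move=> r; case: (pselect (0 < r)) => [rp|rn].
    by have [y hy] := hS r rp; exists y.
  by exists p.
have [f hf] := choice H'.
have Hs : forall y : X, exists e : R, y != p -> 0 < e /\ ~ ball p e y.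
  move=> y; case: (eqVneq y p) => [->|yp]; first by exists 0.
  have pny : p != y by rewrite eq_sym.
  have [e ep nb] := hsep pny; by exists e.
have [sep hsep'] := choice Hs.
pose r := fix r (m : nat) : R := match m with
  | 0 => 1
  | m'.+1 => Num.min (m'.+2%:R^-1) (Num.min (r m') (sep (f (r m')) / 4)) end.
have rpos : forall m, 0 < r m.
  elim => [|m IH] /=; first exact: ltr01.
  have [Sy yp bpy] := hf _ IH.
  have [sp _] := hsep' _ yp.
  by rewrite !lt_min invr_gt0 ltr0Sn IH divr_gt0.
exists (fun m => f (r m)), r => m.
have [Sy yp bpy] := hf _ (rpos m).
have [sp nb] := hsep' _ yp.
split; split => //.
- case: m {Sy yp bpy sp nb} => [|m] /=; first by rewrite invr1.
  by rewrite ge_min lexx.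
- by rewrite /= !ge_min lexx orbT.
- move=> b4; apply: nb; apply: le_ball b4.
  by rewrite /= -ler_pdivlMl ?ltr0n // mulrC !ge_min lexx !orbT.
Qed.

End Top.

Section Key.
Local Open Scope ring_scope.
Context (Omega Psi : Type) (F : set (set Omega)) (rho : set Omega -> set Psi)
  (hF : good_family F) (hrho : partition_regular F rho).
Context (R : realType) (X : pseudoMetricType R) (hX : hausdorff_space X).

Lemma Lambda_sub_Gamma (x : Psi -> X) : Lambda F rho x `<=` Gamma F rho x.
Proof.
move=> eta [E [FE h]] U hU; have [K [fK hK]] := h U hU.
exists (E `\` K); split; last exact: hK.
by case: hF => [_ [_ h3]]; exact: h3.
Qed.

Lemma build_x (A : nat -> set Psi) (y : nat -> X) (p : X) :
  exists x : Psi -> X, forall s, (x s = p /\ forall n, A n s) \/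
    (exists m, [/\ x s = y m, ~ A m s & forall k, (k < m)%N -> A k s]).
Proof.
have H : forall s, exists v : X, (v = p /\ forall n, A n s) \/
    (exists m, [/\ v = y m, ~ A m s & forall k, (k < m)%N -> A k s]).
  move=> s; case: (pselect (forall n, A n s)) => [all|nall].
    by exists p; left.
  have exP : exists n, `[< ~ A n s >].
    apply: contrapT => hn; apply: nall => n; apply: contrapT => nA.
    by apply: hn; exists n; apply/asboolP.
  case: (ex_minnP exP) => m /asboolP nAm minm.
  exists (y m); right; exists m; split => // k km; apply: contrapT => nAk.
  have := minm k (asboolT nAk); by rewrite leqNgt km.
by have [x hx] := choice H; exists x.
Qed.

Section WithX.
Context (A : nat -> set Psi) (y : nat -> X) (p : X) (x : Psi -> X)
  (Adec : forall n, A n.+1 `<=` A n)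
  (hx : forall s, (x s = p /\ forall n, A n s) \/
    (exists m, [/\ x s = y m, ~ A m s & forall k, (k < m)%N -> A k s])).

Lemma xA N s : A N s -> x s = p \/ exists m, (N < m)%N /\ x s = y m.
Proof.
move=> AN; case: (hx s) => [[-> _]|[m [xm nAm allk]]]; first by left.
right; exists m; split => //; rewrite ltnNge; apply/negP => mN.
by apply: nAm; apply: (Adec_le Adec mN).
Qed.

Lemma xnA n s : ~ A n s -> exists m, (m <= n)%N /\ x s = y m.
Proof.
move=> nA; case: (hx s) => [[_ allA]|[m [xm nAm allk]]]; first by case: nA.
exists m; split => //; rewrite leqNgt; apply/negP => nm.
by apply: nA; apply: allk.
Qed.

Lemma xdiff n s : A n s -> ~ A n.+1 s -> x s = y n.+1.
Proof.
move=> An nAn1; case: (hx s) => [[_ allA]|[m [xm nAm allk]]]; first by case: nAn1.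
suff mn : m = n.+1 by rewrite xm mn.
apply/eqP; rewrite eqn_leq; apply/andP; split.
  rewrite leqNgt; apply/negP => h; by apply: nAn1; apply: allk.
rewrite ltnNge; apply/negP => h; by apply: nAm; apply: (Adec_le Adec h).
Qed.

Lemma Gamma_p : (forall n, I_rho_plus F rho (A n)) ->
  (forall U, nbhs p U -> exists N, forall m, (N < m)%N -> U (y m)) ->
  Gamma F rho x p.
Proof.
move=> Aplus yconv U hU; have [N hN] := yconv U hU.
have [E [FE sub]] := (IplusP F rho (A N)).1 (Aplus N).
exists E; split => // s /sub /xA [xp | [m [Nm xm]]] /=; rewrite ?xp ?xm.
  exact: nbhs_singleton hU.
exact: hN.
Qed.

Lemma Lambda_p_P : (forall k, y k != p) -> Lambda F rho x p ->
  exists E, F E /\ forall n, sub_rho rho E (A n).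
Proof.
move=> ynp [E [FE h]]; exists E; split => // n.
have [K [fK hK]] := h _ (nbhs_avoid hX p y n.+1).
exists K; split => // s rs; apply: contrapT => nA.
have [m [mn xm]] := xnA nA.
have := hK s rs; rewrite /= xm => /(_ m); rewrite ltnS mn ynp eqxx.
by move=> /(_ isT isT).
Qed.

Lemma Lambda_y n : I_rho_plus F rho (A n `\` A n.+1) -> Lambda F rho x (y n.+1).
Proof.
move=> /(IplusP F rho _) [E [FE sub]]; exists E; split => // U hU.
exists set0; split; first exact: finite_set0.
move=> s; rewrite setD0 => /sub [An nAn1]; rewrite (xdiff An nAn1).
exact: nbhs_singleton hU.
Qed.

End WithX.
End Key.
Local Open Scope ring_scope.

Unset Implicit Arguments.
Definition ptd (T : topologicalType) (p : T) : Type := T.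
HB.instance Definition _ (T : topologicalType) (p : T) := Topological.on (ptd T p).
HB.instance Definition _ (T : topologicalType) (p : T) := isPointed.Build (ptd T p) p.

Lemma cover_of (T : topologicalType) (p : T) (K : set T) : compact K -> cover_compact K.
Proof.
move=> cK; have e := compact_cover (ptd T p).
have cK' : @compact (ptd T p) K by exact: cK.
rewrite e in cK'; exact: cK'.
Qed.

Lemma inv_dec (R : realType) (n : nat) : (n.+2%:R : R)^-1 <= (n.+1%:R)^-1.
Proof. by rewrite lef_pV2 ?posrE ?ltr0Sn // ler_nat. Qed.

Theorem proposition3p2 (Omega Psi : Type)
  (hOc : countable [set: Omega]) (hOi : infinite_set [set: Omega])
  (hPc : countable [set: Psi]) (hPi : infinite_set [set: Psi])
  (F : set (set Omega)) (hF : good_family F)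
  (rho : set Omega -> set Psi) (hrho : partition_regular F rho)
  (R : realType) (X : pseudoMetricType R) (hX : hausdorff_space X)
  (hacc : exists p : X, limit_point [set: X] p) :
  (P_plus F rho <-> forall x : Psi -> X, Lambda F rho x = Gamma F rho x) /\
  (P_bar F rho <-> forall x : Psi -> X, closed (Lambda F rho x)) /\
  (locally_compact [set: X] ->
     (P_minus F rho <-> forall x : Psi -> X, forall eta : X,
        isolated_point (Gamma F rho x) eta -> Lambda F rho x eta)).
Proof.
have LG := fun x : Psi -> X => @Lambda_sub_Gamma _ _ F rho hF R X x.
have [p hp] := hacc.
have [y [r hyr]] := @seq_build R X hX p setT (fun e ep =>
  let: ex_intro z (And3 zp _ bz) := hp _ (nbhsx_ballx p e ep) in
  ex_intro _ z (And3 I zp bz)).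
have ynp : forall k, y k != p by move=> k; have [_ [? _ _]] := hyr k.
have yconv : forall U, nbhs p U -> exists N, forall m, (N < m)%N -> U (y m).
  move=> U /nbhs_ballP [e ep sub]; have [N hN] := small_inv ep.
  exists N => m Nm; apply: sub; have [[rp rle _ _] [_ b _]] := hyr m.
  apply: le_ball b; apply: (le_trans rle); apply: ltW; apply: hN; exact: ltnW.
split; [|split].
- split.
  + move=> Pp x; apply/seteqP; split; first exact: LG.
    move=> eta Geta.
    pose A n := [set s | ball eta ((n.+1%:R : R)^-1) (x s)].
    have Adec : forall n, A n.+1 `<=` A n.
      by move=> n s; apply: le_ball; apply: inv_dec.
    have Aplus : forall n, I_rho_plus F rho (A n).
      move=> n; apply/IplusP; apply: Geta; apply: nbhsx_ballx.
      by rewrite invr_gt0 ltr0Sn.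
    have [E [FE hE]] := Pp A Adec Aplus.
    exists E; split => // U /nbhs_ballP [e ep sub].
    have [N hN] := small_inv ep; have [K [fK hK]] := hE N.
    exists K; split => // s /hK bs; apply: sub; apply: le_ball bs.
    by apply: ltW; apply: hN.
  + move=> LeqG A Adec Aplus; have [x hx] := build_x A y p.
    apply: (Lambda_p_P hX hx ynp); rewrite LeqG.
    exact: (Gamma_p Adec hx Aplus yconv).
- split.
  + move=> Pb x eta cl; apply: contrapT => nL.
    have [z [rz hz]] := @seq_build R X hX eta (Lambda F rho x) (fun e ep =>
      let: ex_intro w (conj Lw bw) := cl _ (nbhsx_ballx eta e ep) in
      ex_intro _ w (And3 Lw (introN eqP (fun we => nL (eq_ind w _ Lw eta we))) bw)).
    pose A n := [set s | ball eta (2 * rz n) (x s)].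
    have Adec : forall n, A n.+1 `<=` A n.
      move=> n s; apply: le_ball; have [[r0 _ r1 _] _] := hz n; lra.
    have Adiff : forall n, I_rho_plus F rho (A n `\` A n.+1).
      move=> n; have [[r0 _ r1 Lz] [_ bz nbz]] := hz n.
      have [r0' _ _ _] := (hz n.+1).1.
      apply/IplusP; have := LG x _ Lz _ (nbhsx_ballx (z n) _ r0').
      move=> [E [FE sub]]; exists E; split => // s /sub bs; split.
        rewrite /A /=; apply: (le_ball (e1 := rz n + rz n.+1)); first lra.
        exact: ball_triangle bz bs.
      move=> bs2; apply: nbz; apply: (le_ball (e1 := 2 * rz n.+1 + rz n.+1)); first lra.
      apply: ball_triangle bs2 _; exact: ball_sym.
    have Aplus : forall n, I_rho_plus F rho (A n).
      by move=> n; apply: Iplus_up (Adiff n) _ => s [].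
    have [E [FE hE]] := Pb A Adec Aplus Adiff.
    apply: nL; exists E; split => // U /nbhs_ballP [e ep sub].
    have ep2 : 0 < e := ep. have e2 : 0 < e / 2 by lra.
    have [N hN] := small_inv e2; have [K [fK hK]] := hE N.
    exists K; split => // s /hK bs; apply: sub; apply: le_ball bs.
    have [[_ rle _ _] _] := hz N. have h := hN N (leqnn N). have h2 := le_lt_trans rle h. move: h2; clear; move=> h2; lra.
  + move=> Lcl A Adec Aplus Adiff; have [x hx] := build_x A y p.
    apply: (Lambda_p_P hX hx ynp); apply: Lcl => U hU.
    have [N hN] := yconv U hU.
    exists (y N.+1); split; first exact: (Lambda_y Adec hx (Adiff N)).
    exact: hN.
- move=> lc.
  have rdec : forall i j, (i <= j)%N -> r j <= r i.
    move=> i; elim => [|j IH]; first by rewrite leqn0 => /eqP ->.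
    rewrite leq_eqVlt => /orP [/eqP -> //|]; rewrite ltnS => /IH h.
    by apply: le_trans h; have [[_ _ ? _] _] := hyr j.
  have yinj : forall i j, y i = y j -> i = j.
    have key : forall i j, (i < j)%N -> y i = y j -> False.
      move=> i j ij yij; have [[rip _ _ _] [_ _ nb]] := hyr i.
      have [[ri1p _ _ _] _] := hyr i.+1.
      have [_ [_ bj _]] := hyr j.
      apply: nb; rewrite yij; apply: le_ball bj.
      have := rdec _ _ ij; lra.
    move=> i j yij; case: (ltngtP i j) => // ij.
      by case: (key _ _ ij yij).
    by case: (key _ _ ij (esym yij)).
  split.
  + move=> Pm x eta [Geta [U [hU UG]]].
    have [C nC [cC clC]] := lc eta I.
    rewrite withinET in nC.
    have [r0 r0p sub0] := (nbhs_ballP _ _).1 (filterI hU nC).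
    have r0p' : 0 < r0 := r0p.
    pose rr n := Num.min (r0 / 2) ((n.+1%:R : R)^-1).
    have rrp : forall n, 0 < rr n.
      by move=> n; rewrite lt_min invr_gt0 ltr0Sn andbT; clear -r0p'; lra.
    have rr2 : forall n, rr n <= r0 / 2 by move=> n; rewrite ge_min lexx.
    have rrinv : forall n, rr n <= n.+1%:R^-1 by move=> n; rewrite ge_min lexx orbT.
    have rrdec : forall n, rr n.+1 <= rr n.
      by move=> n; rewrite /rr le_min !ge_min lexx inv_dec orbT.
    pose A n := [set s | ball eta (rr n) (x s)].
    have Adec : forall n, A n.+1 `<=` A n by move=> n s; apply: le_ball.
    have Aplus : forall n, I_rho_plus F rho (A n).
      by move=> n; apply/IplusP; apply: Geta; apply: nbhsx_ballx.
    have Adiff : forall n, I_rho F rho (A n `\` A n.+1).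
      move=> n E FE subE.
      pose K := (C `&` closed_ball eta (r0 / 2)) `&` ~` (ball eta (rr n.+1))°.
      have cK : compact K.
        apply: compact_closedI; last exact: open_closedC (open_interior _).
        apply: compact_closedI => //; exact: closed_ball_closed.
      have notG : forall z, K z -> ~ Gamma F rho x z.
        move=> z [[Cz cbz] nint] Gz.
        have Uz : U z by apply: (sub0 z _).1; exact: subset_closure_half r0p' _ cbz.
        have : (U `&` Gamma F rho x) z by split.
        rewrite UG => /= ze; apply: nint; rewrite ze.
        exact: nbhsx_ballx.
      have Hv : forall z, exists V : set X, K z -> nbhs z V /\
          forall E', F E' -> ~ rho E' `<=` [set s | V (x s)].
        move=> z; case: (pselect (K z)) => [Kz|nKz]; last by exists setT.
        apply: contrapT => hn; apply: (notG z Kz) => V hV; apply: contrapT => hE.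
        apply: hn; exists V => _; split => // E' FE' sE'; apply: hE; by exists E'.
      have [V hV] := choice Hv.
      have cK' := @cover_of X eta K cK.
      have [D' sD cov] : finite_subset_cover K (fun z => (V z)°) K.
        apply: cK'; first by move=> z _; exact: open_interior.
        move=> z Kz; exists z => //; exact: (hV z Kz).1.
      have hcov : rho E `<=` [set a | exists2 z, z \in enum_fset D' & V z (x a)].
        move=> a /subE [An nAn1].
        have Ka : K (x a).
          split; [split|].
          - apply: (sub0 _ _).2; apply: le_ball An; apply: (le_trans (rr2 n)).
            by clear -r0p'; lra.
          - apply: subset_closed_ball; apply: (le_ball (rr2 n)); exact: An.
          - by move=> /interior_subset.
        have [z Dz Vz] := cov _ Ka.
        by exists z => //; exact: interior_subset.
      have [E' [z [FE' Dz sE']]] := cover_list hrho FE hcov.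
      have Kz : K z by have := sD z Dz; rewrite in_setE.
      exact: (hV z Kz).2 E' FE' sE'.
    have [E [FE hE]] := Pm A Adec Aplus Adiff.
    exists E; split => // U' /nbhs_ballP [e ep sub].
    have [N hN] := small_inv ep; have [K [fK hK]] := hE N.
    exists K; split => // s /hK bs; apply: sub; apply: le_ball bs.
    by apply: ltW; apply: le_lt_trans (rrinv N) (hN N (leqnn N)).
  + move=> iso A Adec Aplus Adiff; have [x hx] := build_x A y p.
    apply: (Lambda_p_P hX hx ynp); apply: iso.
    have Gp := Gamma_p Adec hx Aplus yconv.
    split => //; have [[r1p _ _ _] [_ _ nb0]] := hyr 1%N.
    have [[r0p _ _ _] [_ _ nby0]] := hyr 0%N.
    exists (ball p (r 1%N)); split; first exact: nbhsx_ballx.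
    apply/seteqP; split; last by move=> z /= ->; split => //; exact: ballxx.
    move=> z [bz Gz] /=; apply: contrapT => zp.
    have pz : p != z by apply/eqP => pz; apply: zp.
    have [e ep nb] := hsep hX pz.
    have e2 : 0 < e / 2 by lra.
    have [N hN] := small_inv e2.
    have hV : nbhs z (ball z (e / 2) `&` [set w | forall k, (k < N)%N -> y k != z -> w != y k]).
      by apply: filterI; [exact: nbhsx_ballx | exact: nbhs_avoid].
    have [E [FE sub]] := Gz _ hV.
    have classify : forall s, rho E s -> exists m, [/\ (0 < m)%N, x s = y m, y m = z,
        ~ A m s & forall k, (k < m)%N -> A k s].
      move=> s /sub [b1 b2]; case: (hx s) => [[xp _] | [m [xm nAm allk]]].
        exfalso; apply: nb; rewrite xp in b1; apply: le_ball (ball_sym b1); lra.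
      have mN : (m < N)%N.
        rewrite ltnNge; apply/negP => Nm.
        have [[_ rle _ _] [_ bm _]] := hyr m.
        have h := hN m Nm.
        have bm' : ball p (e / 2) (y m).
          apply: le_ball bm; apply: ltW; exact: le_lt_trans rle h.
        rewrite xm in b1; apply: nb; apply: (le_ball (e1 := e / 2 + e / 2)); first lra.
        exact: ball_triangle bm' (ball_sym b1).
      have ymz : y m = z.
        apply: contrapT => ne; have := b2 m mN (introN eqP ne).
        by rewrite xm eqxx.
      exists m; split => //; rewrite lt0n; apply/negP => /eqP m0.
      rewrite m0 in ymz; rewrite -ymz in bz; apply: nby0; apply: le_ball bz; lra.
    have [a ra] := rho_ne hrho FE.
    have [m [m0 xa yz _ _]] := classify a ra.
    have := Adiff m.-1; rewrite prednK // => Im.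
    apply: (Im E FE) => s rs.
    have [m' [_ xs ym' nAm' allk']] := classify s rs.
    have mm : m' = m by apply: yinj; rewrite ym' yz.
    rewrite mm in nAm' allk'; split => //; apply: allk'.
    by rewrite -{2}(prednK m0) ltnSn.
Qed.
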